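(* Let $\tilde\omega=\log^*\tilde\delta$, computed in the convolution algebra of $(\mathcal A,\diamond,\Delta_{\mathcal A})$. Then $\tilde\omega(\mathbf 1)=0$ and $\tilde\omega(x^s)=\frac{(-1)^{s+1}}{s}$ for $s\ge1$, and $$\omega=\tilde\omega\circ\Lambda,$$ where $\omega=\log^*\delta$ in the convolution algebra of $\mathcal H_{CK}$.
   Context: Let $k$ be a field of characteristic $0$. $\mathcal A=k[x]$ ($x^0=\mathbf 1$) with the quasi-shuffle product $\diamond$ determined by $\mathbf 1\diamond u=u\diamond\mathbf 1=u$, $x^k\diamond x^l=(x^{k-1}\diamond x^l)x+(x^k\diamond x^{l-1})x+(x^{k-1}\diamond x^{l-1})x$ for $k,l\ge1$, and the deconcatenation coproduct $\Delta_{\mathcal A}(x^n)=\sum_{r=0}^nx^r\otimes x^{n-r}$, is a connected graded Hopf algebra with counit $\varepsilon_{\mathcal A}$. $\tilde\delta:\mathcal A\to k$ is linear with $\tilde\delta(\mathbf 1)=\tilde\delta(x)=1$, $\tilde\delta(x^s)=0$ for $s\ge2$. $\mathcal H_{CK}$ is the Connes–Kreimer Hopf algebra of rooted forests (free commutative algebra on nonempty non-planar rooted trees, unit the empty forest, counit $\varepsilon$, coproduct by admissible cuts: $\Delta_{CK}(u)=\sum v\otimes w$ over decompositions of the vertex set of $u$ into $V\sqcup W$ such that no vertex of $V$ lies strictly below a vertex of $W$, $v,w$ the induced forests). $B_+$ grafts a forest onto a new root; $\Lambda:\mathcal H_{CK}\to\mathcal A$ is the unique unital algebra morphism with $\Lambda(B_+(t_1\cdots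 t_n))=(\Lambda(t_1)\diamond\cdots\diamond\Lambda(t_n))x$ (it is a Hopf algebra morphism). $\delta$ is the character of $\mathcal H_{CK}$ with $\delta(\bullet)=1$ and $\delta(t)=0$ for trees with at least two vertices. For a character $\chi$ of either Hopf algebra, $\log^*\chi=\sum_{n\ge1}\frac{(-1)^{n+1}}{n}(\chi-\text{counit})^{*n}$, with $*$ the convolution product. *)

(* Defs.v *)
From HB Require Import structures.
From mathcomp Require Import all_boot all_order all_algebra.
Set Implicit Arguments. Unset Strict Implicit. Unset Printing Implicit Defensive.
Import Order.TTheory GRing.Theory Num.Theory.
Local Open Scope ring_scope.

(* ---------- Rooted forests (planar representatives) ---------- *)
Inductive rtree := Node of seq rtree.
Definition forest := seq rtree.

Fixpoint nvt (t : rtree) : nat := let: Node cs := t in (sumn (map nvt cs)).+1.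
Definition nvf (f : forest) : nat := sumn (map nvt f).

(* Vertices of a forest are numbered 0 .. nvf f - 1 in preorder.
   ind_t P o t : the forest induced on the vertices of t (numbered from o)
   satisfying P (a vertex's parent in the induced forest is its nearest
   proper ancestor satisfying P). *)
Fixpoint ind_t (P : pred nat) (o : nat) (t : rtree) {struct t} : forest :=
  let: Node cs := t in
  let kids :=
    (fix ind_s (o' : nat) (s : seq rtree) {struct s} : forest :=
       match s with
       | [::] => [::]
       | c :: s' => ind_t P o' c ++ ind_s (o' + nvt c)%N s'
       end) o.+1 cs in
  if P o then [:: Node kids] else kids.

Fixpoint ind_f (P : pred nat) (o : nat) (f : forest) : forest :=
  match f with
  | [::] => [::]
  | c :: s' => ind_t P o c ++ ind_f P (o + nvt c)%N s'
  end.

Definition induced (P : pred nat) (f : forest) : forest := ind_f P 0 f.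

Fixpoint ancs_t (o : nat) (t : rtree) {struct t} : seq (seq nat) :=
  let: Node cs := t in
  [::] :: map (cons o)
    ((fix ancs_s (o' : nat) (s : seq rtree) {struct s} : seq (seq nat) :=
        match s with
        | [::] => [::]
        | c :: s' => ancs_t o' c ++ ancs_s (o' + nvt c)%N s'
        end) o.+1 cs).

Fixpoint ancs_f (o : nat) (f : forest) : seq (seq nat) :=
  match f with
  | [::] => [::]
  | c :: s' => ancs_t o c ++ ancs_f (o + nvt c)%N s'
  end.

(* j lies strictly below i (j is a proper ancestor of i, roots at the bottom) *)
Definition strictly_below (f : forest) (j i : nat) : bool :=
  j \in nth [::] (ancs_f 0 f) i.

(* V (the left part) is admissible: no vertex of V lies strictly below a
   vertex of W = complement of V. *)
Definition admissible (f : forest) (V : {set 'I_(nvf f)}) : bool :=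
  [forall i : 'I_(nvf f), forall j : 'I_(nvf f),
     strictly_below f j i ==> ~~ ((j \in V) && (i \notin V))].

Definition idx_pred (n : nat) (V : {set 'I_n}) : pred nat :=
  fun m => m \in [seq val i | i in V].

Definition eps_CK (k : fieldType) (f : forest) : k := if f is [::] then 1 else 0.

Definition conv_CK (k : fieldType) (phi psi : forest -> k) (f : forest) : k :=
  \sum_(V : {set 'I_(nvf f)} | admissible V)
     phi (induced (idx_pred V) f) * psi (induced (idx_pred (~: V)) f).

Fixpoint convpow_CK (k : fieldType) (phi : forest -> k) (n : nat) : forest -> k :=
  if n is n'.+1 then conv_CK phi (convpow_CK phi n') else @eps_CK k.

(* partial sum  sum_{n=1}^N (-1)^{n+1}/n (chi - eps)^{*n}  of log^* chi *)
Definition log_partial_CK (k : fieldType) (N : nat) (chi : forest -> k) (f : forest) : k :=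
  \sum_(1 <= n < N.+1)
     ((-1) ^+ n.+1 / n%:R) * convpow_CK (fun g => chi g - eps_CK k g) n f.

Definition delta_CK (k : fieldType) (f : forest) : k :=
  \prod_(t <- f) (if t is Node [::] then 1 else 0).

(* ---------- The Hopf algebra A = k[x]; functionals given by values on x^n ---------- *)
Definition eps_A (k : fieldType) (n : nat) : k := (n == 0%N)%:R.

Definition conv_A (k : fieldType) (phi psi : nat -> k) (n : nat) : k :=
  \sum_(r < n.+1) phi r * psi (n - r)%N.

Fixpoint convpow_A (k : fieldType) (phi : nat -> k) (n : nat) : nat -> k :=
  if n is n'.+1 then conv_A phi (convpow_A phi n') else @eps_A k.

Definition log_partial_A (k : fieldType) (N : nat) (chi : nat -> k) (s : nat) : k :=
  \sum_(1 <= n < N.+1)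
     ((-1) ^+ n.+1 / n%:R) * convpow_A (fun m => chi m - eps_A k m) n s.

Definition delta_tilde (k : fieldType) (s : nat) : k := if (s <= 1)%N then 1 else 0.

Definition eval_A (k : fieldType) (phi : nat -> k) (p : {poly k}) : k :=
  \sum_(i < size p) p`_i * phi i.

(* quasi-shuffle product on monomials: qsh a b = x^a <> x^b *)
Fixpoint qsh (k : fieldType) (a : nat) {struct a} : nat -> {poly k} :=
  fix qsh_a (b : nat) : {poly k} :=
    match a, b with
    | 0%N, _ => 'X^b
    | _, 0%N => 'X^a
    | a'.+1, b'.+1 => (qsh k a' b + qsh_a b' + qsh k a' b') * 'X
    end.

Definition diamond (k : fieldType) (p q : {poly k}) : {poly k} :=
  \sum_(i < size p) \sum_(j < size q) (p`_i * q`_j) *: qsh k i j.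

Fixpoint Lambda_t (k : fieldType) (t : rtree) : {poly k} :=
  let: Node cs := t in foldr (@diamond k) 1 (map (Lambda_t k) cs) * 'X.

Definition Lambda (k : fieldType) (f : forest) : {poly k} :=
  foldr (@diamond k) 1 (map (Lambda_t k) f).

(* Main.v *)
Require Import Defs.
From HB Require Import structures.
From mathcomp Require Import all_boot all_order all_algebra.
From Stdlib Require Import Lia.
Import GRing.Theory.
Local Open Scope ring_scope.
Set Implicit Arguments. Unset Strict Implicit. Unset Printing Implicit Defensive.

Ltac mlia := repeat match goal with
 | H : is_true (_ <= _)%N |- _ => move/leP: H => H
 | H : is_true (_ < _)%N |- _ => move/ltP: H => H
 | H : is_true (_ && _) |- _ => let a := fresh "a" in let b := fresh "b" in case/andP: H => a b
 | |- is_true (_ && _) => apply/andP; split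
 | |- is_true (_ <= _)%N => apply/leP
 | |- is_true (_ < _)%N => apply/ltP
 | |- is_true (_ == _) => apply/eqP
 end; unfold addn, subn, muln, addn_rec, subn_rec, muln_rec in *; lia.

Section TI.
Variables (P : rtree -> Prop) (Q : forest -> Prop).
Hypotheses (HN : forall cs, Q cs -> P (Node cs)) (H0 : Q [::])
  (HC : forall c s, P c -> Q s -> Q (c :: s)).
Fixpoint tind (t : rtree) : P t :=
  match t with Node cs => HN
    ((fix F (s : forest) : Q s := match s with [::] => H0 | c :: s' => HC (tind c) (F s') end) cs) end.
Definition find (s : forest) : Q s :=
  (fix F (s : forest) : Q s := match s with [::] => H0 | c :: s' => HC (tind c) (F s') end) s.
Lemma tfind : (forall t, P t) /\ (forall f, Q f).
Proof. split; [exact: tind | exact: find]. Qed.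
End TI.

Lemma ind_t_node P o cs : ind_t P o (Node cs) =
  if P o then [:: Node (ind_f P o.+1 cs)] else ind_f P o.+1 cs.
Proof.
rewrite /=; congr (if _ then [:: Node _] else _);
  elim: cs o.+1 => //= c s IH o'; by rewrite IH.
Qed.

Lemma ancs_t_node o cs : ancs_t o (Node cs) = [::] :: map (cons o) (ancs_f o.+1 cs).
Proof. rewrite /=; congr (_ :: map _ _); elim: cs o.+1 => //= c s IH o'; by rewrite IH. Qed.

Lemma ind_f_cons P o c s : ind_f P o (c :: s) = ind_t P o c ++ ind_f P (o + nvt c) s.
Proof. by []. Qed.
Lemma ancs_f_cons o c s : ancs_f o (c :: s) = ancs_t o c ++ ancs_f (o + nvt c) s.
Proof. by []. Qed.
Lemma nvt_node cs : nvt (Node cs) = (nvf cs).+1. Proof. by []. Qed.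
Lemma nvf_cons c s : nvf (c :: s) = (nvt c + nvf s)%N. Proof. by []. Qed.

Lemma Lambda_t_node k cs : Lambda_t k (Node cs) = Lambda k cs * 'X. Proof. by []. Qed.
Lemma Lambda_cons k c s : Lambda k (c :: s) = diamond (Lambda_t k c) (Lambda k s). Proof. by []. Qed.

Fixpoint hc_t (t : rtree) : seq bool :=
  let: Node cs := t in (~~ nilp cs) :: flatten (map hc_t cs).
Definition hc_f (f : forest) : seq bool := flatten (map hc_t f).
Lemma hc_t_node cs : hc_t (Node cs) = (~~ nilp cs) :: hc_f cs. Proof. by []. Qed.
Lemma hc_f_cons c s : hc_f (c :: s) = hc_t c ++ hc_f s. Proof. by []. Qed.

Lemma size_hc : (forall t, size (hc_t t) = nvt t) /\ (forall f, size (hc_f f) = nvf f).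
Proof.
apply: tfind => [cs IH|//|c s IHc IHs].
- by rewrite hc_t_node nvt_node /= IH.
- by rewrite hc_f_cons nvf_cons size_cat IHc IHs.
Qed.

Local Close Scope ring_scope.

Lemma nth_true_lt (s : seq bool) i : nth false s i -> (i < size s)%N.
Proof. by move=> H; rewrite ltnNge; apply/negP => /(nth_default false); rewrite H. Qed.
Lemma nth_mem_lt (s : seq (seq nat)) i x : x \in nth [::] s i -> (i < size s)%N.
Proof. by move=> H; rewrite ltnNge; apply/negP => /(nth_default [::]) E; rewrite E in H. Qed.

Lemma eq_ind : (forall t o P Q, (forall i, (o <= i < o + nvt t)%N -> P i = Q i) -> ind_t P o t = ind_t Q o t)
 /\ (forall f o P Q, (forall i, (o <= i < o + nvf f)%N -> P i = Q i) -> ind_f P o f = ind_f Q o f).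
Proof.
apply: tfind => [cs IH|//|c s IHc IHs] o P Q H.
- rewrite !ind_t_node (H o); last by rewrite nvt_node; mlia.
  rewrite (IH o.+1 P Q) // => i Hi; apply: H; rewrite nvt_node; mlia.
- rewrite !ind_f_cons (IHc o P Q) ?(IHs (o + nvt c) P Q) // => i Hi; apply: H; rewrite nvf_cons; mlia.
Qed.

Lemma ind_all : (forall t o (P : pred nat), (forall i, (o <= i < o + nvt t)%N -> P i) -> ind_t P o t = [:: t])
 /\ (forall f o (P : pred nat), (forall i, (o <= i < o + nvf f)%N -> P i) -> ind_f P o f = f).
Proof.
apply: tfind => [cs IH|//|c s IHc IHs] o P H.
- rewrite !ind_t_node H; last by rewrite nvt_node; mlia.
  rewrite (IH o.+1 P) // => i Hi; apply: H; rewrite nvt_node; mlia.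
- rewrite !ind_f_cons (IHc o P) ?(IHs (o + nvt c) P) // => i Hi; apply: H; rewrite nvf_cons; mlia.
Qed.

Lemma nilp_cat (T : Type) (s1 s2 : seq T) : nilp (s1 ++ s2) = nilp s1 && nilp s2.
Proof. by rewrite /nilp size_cat addn_eq0. Qed.

Lemma ind_nil : (forall t o (P : pred nat), nilp (ind_t P o t) = ~~ has P (iota o (nvt t)))
 /\ (forall f o (P : pred nat), nilp (ind_f P o f) = ~~ has P (iota o (nvf f))).
Proof.
apply: tfind => [cs IH|//|c s IHc IHs] o P.
- rewrite ind_t_node nvt_node /=; case: (P o) => //=; exact: IH.
- by rewrite ind_f_cons nilp_cat nvf_cons iotaD has_cat negb_or IHc IHs.
Qed.

Definition allb (g : forest) := all (fun t => if t is Node [::] then true else false) g.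

Lemma L4a : (forall t o (P : pred nat), (forall i, nth false (hc_t t) i -> ~~ P (o + i)%N) -> allb (ind_t P o t))
 /\ (forall f o (P : pred nat), (forall i, nth false (hc_f f) i -> ~~ P (o + i)%N) -> allb (ind_f P o f)).
Proof.
apply: tfind => [cs IH|//|c s IHc IHs] o P H.
- rewrite ind_t_node; case Po: (P o).
  + move: (H 0%N); rewrite /= addn0 Po; case: cs {IH H} => //= c s.
    by move/(_ isT).
  + apply: IH => i Hi; have := H i.+1; rewrite hc_t_node /= addnS -addSn; exact.
- rewrite ind_f_cons /allb all_cat; apply/andP; split.
  + apply: IHc => i Hi; apply: H; rewrite hc_f_cons nth_cat.
    by rewrite (nth_true_lt Hi) Hi.
  + apply: IHs => i Hi; rewrite -addnA; apply: H.
    by rewrite hc_f_cons nth_cat (size_hc.1 c) ltnNge leq_addr /= addKn.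
Qed.

Lemma L4b : (forall t o (P : pred nat) i, nth false (hc_t t) i -> P (o + i)%N -> P (o + i).+1 -> ~~ allb (ind_t P o t))
 /\ (forall f o (P : pred nat) i, nth false (hc_f f) i -> P (o + i)%N -> P (o + i).+1 -> ~~ allb (ind_f P o f)).
Proof.
apply: tfind => [cs IH|//|c s IHc IHs] o P i.
- rewrite ind_t_node hc_t_node; case: i => [|i].
  + rewrite /= addn0; case: cs {IH} => [//|c s] _ Po Po1; rewrite Po.
    by case: c => ccs; rewrite ind_f_cons ind_t_node Po1.
  + move=> /= Hc P1 P2; case Po: (P o).
    * have : ~~ nilp (ind_f P o.+1 cs).
        rewrite (ind_nil.2) negbK; apply/hasP; exists (o.+1 + i)%N.
          rewrite mem_iota leq_addr /= ltn_add2l -(size_hc.2 cs); exact: nth_true_lt Hc.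
        by rewrite addSn -addnS.
      by case: (ind_f P o.+1 cs).
    * apply: (IH o.+1 P i) => //; by rewrite addSn -addnS.
- by rewrite /hc_f /= nth_nil.
- rewrite hc_f_cons ind_f_cons /allb all_cat negb_and nth_cat (size_hc.1 c).
  case: ltnP => Hi Hc P1 P2.
  + by rewrite (IHc o P i).
  + rewrite (IHs (o + nvt c)%N P (i - nvt c)%N) ?orbT //; by rewrite -addnA subnKC.
Qed.

Lemma size_ancs : (forall t o, size (ancs_t o t) = nvt t) /\ (forall f o, size (ancs_f o f) = nvf f).
Proof.
apply: tfind => [cs IH|//|c s IHc IHs] o.
- by rewrite ancs_t_node /= size_map IH.
- by rewrite ancs_f_cons size_cat IHc IHs.
Qed.

Lemma G1 : (forall t o i, nth false (hc_t t) i -> (o + i)%N \in nth [::] (ancs_t o t) i.+1)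
 /\ (forall f o i, nth false (hc_f f) i -> (o + i)%N \in nth [::] (ancs_f o f) i.+1).
Proof.
apply: tfind => [cs IH|//|c s IHc IHs] o i.
- rewrite ancs_t_node hc_t_node; case: i => [|i] /=.
  + case: cs {IH} => [//|c s] _.
    rewrite (nth_map [::]) ?addn0 ?mem_head //.
    rewrite ancs_f_cons size_cat (size_ancs.1 c). by case: c.
  + move=> Hc; have H := IH o.+1 i Hc.
    rewrite (nth_map [::]); last exact: nth_mem_lt H.
    by rewrite in_cons addnS -addSn H orbT.
- by rewrite /hc_f /= nth_nil.
- rewrite hc_f_cons ancs_f_cons !nth_cat (size_hc.1 c) (size_ancs.1 c).
  case: (ltnP i (nvt c)) => Hi Hc.
  + have H := IHc o i Hc; have L := nth_mem_lt H; rewrite (size_ancs.1 c) in L; by rewrite L.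
  + have H := IHs (o + nvt c)%N (i - nvt c)%N Hc.
    rewrite -addnA subnKC // in H.
    by rewrite ltnNge (leq_trans Hi) // subSn.
Qed.

Lemma G2 : (forall t o i j, j \in nth [::] (ancs_t o t) i -> (o <= j)%N && nth false (hc_t t) (j - o))
 /\ (forall f o i j, j \in nth [::] (ancs_f o f) i -> (o <= j)%N && nth false (hc_f f) (j - o)).
Proof.
apply: tfind => [cs IH o i j|o i j|c s IHc IHs o i j].
- rewrite ancs_t_node hc_t_node; case: i => [|i] //=.
  case: (ltnP i (size (ancs_f o.+1 cs))) => Hi; last by rewrite nth_default ?size_map.
  rewrite (nth_map [::]) // in_cons => /orP [/eqP -> | Hj].
  + rewrite leqnn subnn /=; move: Hi; rewrite (size_ancs.2 cs); by case: cs IH.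
  + case/andP: (IH o.+1 i j Hj) => H1 H2.
    have -> : (j - o = (j - o.+1).+1)%N by mlia.
    rewrite /= H2 andbT; mlia.
- by rewrite /= nth_nil.
- rewrite hc_f_cons ancs_f_cons nth_cat (size_ancs.1 c).
  case: (ltnP i (nvt c)) => Hi Hj.
  + case/andP: (IHc o i j Hj) => H1 H2.
    by rewrite H1 nth_cat (size_hc.1 c) -(size_hc.1 c) (nth_true_lt H2).
  + case/andP: (IHs (o + nvt c)%N _ j Hj) => H1 H2.
    rewrite nth_cat (size_hc.1 c).
    have -> : (j - o < nvt c)%N = false by apply/negbTE; rewrite -leqNgt; mlia.
    have -> : (j - o - nvt c = j - (o + nvt c))%N by rewrite subnDA.
    rewrite H2 andbT; mlia.
Qed.

Definition adm (f : forest) (P : pred nat) := [forall i : 'I_(nvf f), forall j : 'I_(nvf f),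
  strictly_below f j i ==> ~~ (P j && ~~ P i)].
Definition leafy (f : forest) (P : pred nat) := [forall i : 'I_(nvf f), P i ==> ~~ nth false (hc_f f) i].

Lemma K f P : adm f P && allb (induced P f) = leafy f P.
Proof.
apply/idP/idP.
- case/andP => Ha Hb; apply/forallP => i; apply/implyP => Pi; apply/negP => Hc.
  have G := G1.2 f 0%N i Hc; rewrite add0n in G.
  have Hi1 : (i.+1 < nvf f)%N by move: (nth_mem_lt G); rewrite (size_ancs.2 f 0%N).
  have := forallP Ha (Ordinal Hi1) => /forallP /(_ i) /implyP /(_ G).
  rewrite /= Pi /= negbK => Pi1.
  have := L4b.2 f 0%N P i Hc; rewrite add0n => /(_ Pi Pi1).
  by rewrite /induced Hb.
- move=> Hl; apply/andP; split.
  + apply/forallP => i; apply/forallP => j; apply/implyP => Hs.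
    case/andP: (G2.2 f 0%N i j Hs) => _; rewrite subn0 => Hh.
    have := forallP Hl j => /implyP H.
    by apply/negP => /andP [/H]; rewrite Hh.
  + apply: (L4a.2 f 0%N P) => i Hh; rewrite add0n.
    have Hi : (i < nvf f)%N by rewrite -(size_hc.2 f); exact: nth_true_lt Hh.
    have := forallP Hl (Ordinal Hi) => /implyP H.
    by apply/negP => /H; rewrite /= Hh.
Qed.

Local Open Scope ring_scope.

Fixpoint masks (n : nat) : seq (seq bool) :=
  if n is n'.+1 then [seq false :: m | m <- masks n'] ++ [seq true :: m | m <- masks n']
  else [:: [::]].

Lemma masks_add (k : fieldType) a b (F : seq bool -> k) :
  \sum_(m <- masks (a + b)) F m = \sum_(m1 <- masks a) \sum_(m2 <- masks b) F (m1 ++ m2).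
Proof.
elim: a F => [|a IH] F; first by rewrite add0n big_seq1.
rewrite addSn /= !big_cat !big_map /=.
by rewrite (IH (fun m => F (false :: m))) (IH (fun m => F (true :: m))).
Qed.

Lemma idxE n (V : {set 'I_n}) (x : 'I_n) : idx_pred V x = (x \in V).
Proof. by rewrite /idx_pred /image_mem mem_map ?mem_enum //; exact: val_inj. Qed.

Lemma sets_to_masks (k : fieldType) n (H : pred nat -> k) :
  (forall P Q : pred nat, (forall i, (i < n)%N -> P i = Q i) -> H P = H Q) ->
  \sum_(V : {set 'I_n}) H (idx_pred V) = \sum_(m <- masks n) H (nth false m).
Proof.
elim: n H => [|n IH] H Hext.
  rewrite (big_pred1 set0) ?big_seq1; first by apply: Hext.
  by move=> V /=; apply/esym/eqP/setP => [[i Hi]].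
pose mkV (p : bool * {set 'I_n}) : {set 'I_n.+1} :=
  [set i : 'I_n.+1 | if unlift ord0 i is Some j then j \in p.2 else p.1].
pose spV (V : {set 'I_n.+1}) : bool * {set 'I_n} := (ord0 \in V, [set j : 'I_n | lift ord0 j \in V]).
rewrite (reindex mkV) /=; last first.
  exists spV => [[b W] _ | V _].
    rewrite /spV /mkV inE unlift_none; congr pair; apply/setP => j.
    by rewrite !inE liftK.
  apply/setP => i; rewrite /mkV /spV !inE; case: unliftP => [j ->|->] //.
  by rewrite inE.
rewrite -(pair_big xpredT xpredT (fun b W => H (idx_pred (mkV (b, W))))) big_bool /=.
have E b W : H (idx_pred (mkV (b, W))) = H (fun i => if i is i'.+1 then idx_pred W i' else b).
  apply: Hext => i Hi; rewrite -[i]/(nat_of_ord (Ordinal Hi)) idxE /mkV inE /=.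
  case: unliftP => [j Hj|Hj]; move: (congr1 val Hj); rewrite /= ?lift0 //.
    by case: i Hi Hj => // i Hi Hj [->]; rewrite idxE.
  by case: i Hi Hj.
rewrite (eq_bigr _ (fun W _ => E true W)) (eq_bigr _ (fun W _ => E false W)).
have IT b := IH (fun P => H (fun i => if i is i'.+1 then P i' else b)).
rewrite /= in IT; rewrite !IT; first (rewrite /= big_cat !big_map /= addrC; congr (_ + _); apply: eq_bigr => m _; apply: Hext => -[|i]) => //.
- by move=> P Q HPQ; apply: Hext => -[|i] // Hi; apply: HPQ.
- by move=> P Q HPQ; apply: Hext => -[|i] // Hi; apply: HPQ.
Qed.

Fixpoint lf (m h : seq bool) : bool :=
  match m, h with b :: m', c :: h' => ~~ (b && c) && lf m' h' | _, _ => true end.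

Lemma lfP m h : reflect (forall i, nth false m i -> ~~ nth false h i) (lf m h).
Proof.
elim: m h => [|b m IH] [|c h] /=; try by apply: ReflectT => i; rewrite ?nth_nil.
apply: (iffP andP) => [[H1 /IH H2] [|i] //= Hb | H]; first by move: H1; rewrite Hb.
  exact: H2.
split; first by move: (H 0%N) => /=; case: (b); case: (c) => // /(_ isT).
apply/IH => i; exact: (H i.+1).
Qed.

Lemma lf_cat m1 m2 h1 h2 : size m1 = size h1 -> lf (m1 ++ m2) (h1 ++ h2) = lf m1 h1 && lf m2 h2.
Proof. by elim: m1 h1 => [|b m IH] [|c h] //= [/IH ->]; rewrite andbA. Qed.

Lemma leafy_lf f m : leafy f (nth false m) = lf m (hc_f f).
Proof.
apply/forallP/lfP => H i.
- move=> Hm; case: (ltnP i (nvf f)) => Hi.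
    by have := H (Ordinal Hi) => /implyP /(_ Hm).
  by rewrite nth_default // (size_hc.2 f).
- by apply/implyP; apply: H.
Qed.

Lemma hasS b m n : has (nth false (b :: m)) (iota 0 n.+1) = b || has (nth false m) (iota 0 n).
Proof.
rewrite /= (iotaDl 1 0) has_map; congr orb; apply: eq_has => i; by rewrite /= add1n.
Qed.

Lemma MZ (k : fieldType) n (Y : seq bool -> k) :
  \sum_(mk <- masks n) (if has (nth false mk) (iota 0 n) then 0 else Y mk) = Y (nseq n false).
Proof.
elim: n Y => [|n IH] Y; first by rewrite big_seq1.
rewrite [masks _]/= big_cat !big_map.
rewrite (eq_bigr (fun mk => if has (nth false mk) (iota 0 n) then 0 else Y (false :: mk))); last first.
  by move=> mk _; rewrite hasS.
have -> : \sum_(mk <- masks n) (if has (nth false (true :: mk)) (iota 0 n.+1) then 0 else Y (true :: mk)) = 0 :> k.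
  by apply: big1.
by rewrite IH; exact: addr0.
Qed.

Lemma size_masks n m : m \in masks n -> size m = n.
Proof.
elim: n m => [|n IH] m /=; first by rewrite inE => /eqP ->.
by rewrite mem_cat => /orP [] /mapP [m' /IH <- ->].
Qed.

Section CK.
Variable k : fieldType.

Definition F n f := convpow_CK (fun g => delta_CK k g - eps_CK k g) n f.

Lemma delta_allb g : delta_CK k g = (allb g)%:R.
Proof.
rewrite /delta_CK; elim: g => [|t g IH]; first by rewrite big_nil.
by rewrite big_cons IH; case: t => [[|? ?]] /=; rewrite ?mul1r ?mul0r.
Qed.

Lemma phi_val g : delta_CK k g - eps_CK k g = (allb g && ~~ nilp g)%:R.
Proof. by rewrite delta_allb; case: g => [|t g] /=; rewrite ?subrr ?subr0 ?andbT. Qed.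

Lemma F_S n f : F n.+1 f = \sum_(mk <- masks (nvf f))
  (lf mk (hc_f f) && has (nth false mk) (iota 0 (nvf f)))%:R * F n (induced (predC (nth false mk)) f).
Proof.
rewrite /F /= /conv_CK big_mkcond /=.
pose H := fun P => (adm f P)%:R * (delta_CK k (induced P f) - eps_CK k (induced P f))
   * F n (induced (predC P) f).
transitivity (\sum_(V : {set 'I_(nvf f)}) H (idx_pred V)).
  apply: eq_bigr => V _; rewrite /H.
  have -> : admissible V = adm f (idx_pred V).
    by rewrite /admissible /adm; apply: eq_forallb => i; apply: eq_forallb => j; rewrite !idxE.
  have -> : induced (idx_pred (~: V)) f = induced (predC (idx_pred V)) f.
    apply: (eq_ind.2) => i /andP [_ Hi]; rewrite add0n in Hi.
    by rewrite /= -[i]/(nat_of_ord (Ordinal Hi)) idxE (idxE V) inE.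
  by case: (adm f _); rewrite ?mul1r ?mul0r.
rewrite (sets_to_masks (H := H)).
  apply: eq_bigr => mk _; rewrite /H phi_val -natrM mulnb andbA K leafy_lf.
  by rewrite /induced (ind_nil.2) negbK.
move=> P Q HPQ.
have E1 : adm f P = adm f Q.
  by apply: eq_forallb => i; apply: eq_forallb => j; rewrite !HPQ.
have E2 : induced P f = induced Q f.
  by apply: (eq_ind.2) => i /andP [_ Hi]; apply: HPQ.
have E3 : induced (predC P) f = induced (predC Q) f.
  by apply: (eq_ind.2) => i /andP [_ Hi]; rewrite /= HPQ.
by rewrite /H E1 E2 E3.
Qed.

Definition G m f := \sum_(0 <= i < m.+1) 'C(m, i)%:R * F i f.

Lemma G0 f : G 0 f = eps_CK k f.
Proof. by rewrite /G big_nat1 bin0 mul1r. Qed.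

Lemma G_S m f : G m.+1 f = \sum_(mk <- masks (nvf f))
   (lf mk (hc_f f))%:R * G m (induced (predC (nth false mk)) f).
Proof.
set X := fun mk => G m (induced (predC (nth false mk)) f).
have A : F 0 f + \sum_(0 <= i < m.+1) 'C(m, i.+1)%:R * F i.+1 f = G m f.
  transitivity (\sum_(0 <= i < m.+2) 'C(m, i)%:R * F i f).
    by rewrite [RHS]big_nat_recl //= bin0 mul1r.
  rewrite big_nat_recr // bin_small // mul0r /G; exact: addr0.
have B : \sum_(0 <= i < m.+1) 'C(m, i)%:R * F i.+1 f = \sum_(mk <- masks (nvf f))
    (lf mk (hc_f f) && has (nth false mk) (iota 0 (nvf f)))%:R * X mk.
  under eq_bigr do rewrite F_S mulr_sumr.
  rewrite exchange_big /=; apply: eq_bigr => mk _.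
  rewrite /X /G mulr_sumr; apply: eq_bigr => i _; by rewrite mulrCA.
rewrite /G big_nat_recl //= bin0 mul1r.
under eq_bigr do rewrite binS natrD mulrDl.
rewrite big_split /= addrA A B.
have C : \sum_(mk <- masks (nvf f)) (lf mk (hc_f f))%:R * X mk =
  \sum_(mk <- masks (nvf f)) ((lf mk (hc_f f) && has (nth false mk) (iota 0 (nvf f)))%:R * X mk
     + (if has (nth false mk) (iota 0 (nvf f)) then 0 else (lf mk (hc_f f))%:R * X mk)).
  apply: eq_bigr => mk _; case: has; by rewrite ?andbT ?addr0 ?andbF ?mul0r ?add0r.
rewrite C big_split MZ /= addrC; congr (_ + _).
have -> : lf (nseq (nvf f) false) (hc_f f) by apply/lfP => i; rewrite nth_nseq if_same.
rewrite mul1r /X /induced (ind_all.2) // => i _.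
by rewrite /= nth_nseq if_same.
Qed.

End CK.

Section L.
Variable k : fieldType.

Definition tau (m : nat) (p : {poly k}) : k := \sum_(i < size p) p`_i * 'C(m, i)%:R.

Lemma tau_big m (p : {poly k}) B : (size p <= B)%N -> tau m p = \sum_(i < B) p`_i * 'C(m, i)%:R.
Proof.
move=> Hb; rewrite /tau (big_ord_widen B (fun i => p`_i * 'C(m,i)%:R) Hb) big_mkcond /=.
apply: eq_bigr => i _; case: ltnP => // Hi; by rewrite nth_default // mul0r.
Qed.

Lemma tau_add m (p q : {poly k}) : tau m (p + q) = tau m p + tau m q.
Proof.
rewrite !(@tau_big m _ (maxn (size p) (size q))) ?leq_maxl ?leq_maxr ?size_polyD //.
rewrite -big_split; apply: eq_bigr => i _; by rewrite coefD mulrDl.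
Qed.

Lemma tau0 m : tau m 0 = 0.
Proof. by rewrite /tau size_poly0 big_ord0. Qed.

Lemma tau_scale m c (p : {poly k}) : tau m (c *: p) = c * tau m p.
Proof.
rewrite !(@tau_big m _ (size p)) ?size_scale_leq // mulr_sumr.
apply: eq_bigr => i _; by rewrite coefZ mulrA.
Qed.

Lemma tau_sum m (I : Type) (r : seq I) (P : pred I) (Fp : I -> {poly k}) :
  tau m (\sum_(i <- r | P i) Fp i) = \sum_(i <- r | P i) tau m (Fp i).
Proof. exact: (big_morph (tau m) (tau_add m) (tau0 m)). Qed.

Lemma hockey m i : (\sum_(0 <= j < m) 'C(j, i))%N = 'C(m, i.+1).
Proof.
elim: m => [|m IH]; first by rewrite big_geq // bin0n.
by rewrite big_nat_recr //= IH binS addnC.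
Qed.

Lemma tau_X m (p : {poly k}) : tau m (p * 'X) = \sum_(0 <= j < m) tau j p.
Proof.
  have Hs : (size (p * 'X)%R <= (size p).+1)%N.
  by apply: (leq_trans (size_polyMleq _ _)); rewrite size_polyX addn2.
rewrite (@tau_big m _ _ Hs) big_ord_recl coefMX /= mul0r add0r.
transitivity (\sum_(i < size p) p`_i * (\sum_(0 <= j < m) 'C(j, i)%:R)).
  apply: eq_bigr => i _; by rewrite coefMX /= -natr_sum hockey.
rewrite /tau exchange_big; apply: eq_bigr => i _; by rewrite mulr_sumr.
Qed.

Lemma tau_Xn m n : tau m ('X^n) = 'C(m, n)%:R.
Proof.
rewrite /tau size_polyXn big_ord_recr /= coefXn eqxx mul1r big1 ?add0r // => i _.
by rewrite coefXn /= (ltn_eqF (ltn_ord i)) mul0r.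
Qed.

Lemma hock2 a b m : (\sum_(0 <= j < m) ('C(j,a) * 'C(j,b.+1) + 'C(j,a.+1) * 'C(j,b) + 'C(j,a) * 'C(j,b)))%N
  = ('C(m,a.+1) * 'C(m,b.+1))%N.
Proof.
elim: m => [|m IH]; first by rewrite big_geq.
rewrite big_nat_recr //= IH !binS.
rewrite !mulnDl !mulnDr; unfold addn, muln, addn_rec, muln_rec; lia.
Qed.

Lemma qsh0 b : qsh k 0 b = 'X^b. Proof. by case: b. Qed.
Lemma qshS0 a : qsh k a.+1 0 = 'X^(a.+1). Proof. by []. Qed.
Lemma qshSS a b : qsh k a.+1 b.+1 = (qsh k a b.+1 + qsh k a.+1 b + qsh k a b) * 'X.
Proof. by []. Qed.

Lemma tau_qsh m a b : tau m (qsh k a b) = 'C(m, a)%:R * 'C(m, b)%:R.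
Proof.
elim: a b m => [|a IHa] b m.
  by rewrite qsh0 tau_Xn bin0 mul1r.
elim: b m => [|b IHb] m.
  by rewrite qshS0 tau_Xn bin0 mulr1.
rewrite qshSS tau_X.
under eq_bigr do rewrite !tau_add IHa IHb IHa -!natrM -!natrD.
by rewrite -natr_sum hock2 natrM.
Qed.

Lemma tau1 m : tau m 1 = 1.
Proof. by rewrite /tau size_poly1 big_ord1 coefC /= bin0 mulr1. Qed.

Lemma tau_diamond m (p q : {poly k}) : tau m (diamond p q) = tau m p * tau m q.
Proof.
rewrite /diamond tau_sum.
transitivity (\sum_(i < size p) \sum_(j < size q) (p`_i * q`_j) * ('C(m,i)%:R * 'C(m,j)%:R)).
  apply: eq_bigr => i _; rewrite tau_sum; apply: eq_bigr => j _; by rewrite tau_scale tau_qsh.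
rewrite /tau mulr_suml; apply: eq_bigr => i _; rewrite mulr_sumr; apply: eq_bigr => j _.
by rewrite mulrACA.
Qed.

Definition TT m g := tau m (Lambda k g).

Lemma TT_prod m g : TT m g = \prod_(t <- g) tau m (Lambda_t k t).
Proof.
elim: g => [|t g IH]; first by rewrite big_nil /TT tau1.
by rewrite big_cons -IH /TT Lambda_cons tau_diamond.
Qed.

Lemma TT_cat m g1 g2 : TT m (g1 ++ g2) = TT m g1 * TT m g2.
Proof. by rewrite !TT_prod big_cat. Qed.

Lemma tau_node m cs : tau m (Lambda_t k (Node cs)) = \sum_(0 <= j < m) TT j cs.
Proof. by rewrite Lambda_t_node tau_X. Qed.

Lemma TT0 g : TT 0 g = (nilp g)%:R.
Proof.
rewrite TT_prod; case: g => [|[cs] g]; first by rewrite big_nil.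
by rewrite big_cons tau_node big_geq // mul0r.
Qed.

Lemma TT_single m t : TT m [:: t] = tau m (Lambda_t k t).
Proof. by rewrite TT_prod big_seq1. Qed.

Definition mp o (mk : seq bool) : pred nat := fun i => ~~ nth false mk (i - o).

Lemma R3s : (forall t o m, \sum_(mk <- masks (nvt t)) (lf mk (hc_t t))%:R * TT m (ind_t (mp o mk) o t)
              = tau m.+1 (Lambda_t k t))
 /\ (forall f o m, \sum_(mk <- masks (nvf f)) (lf mk (hc_f f))%:R * TT m (ind_f (mp o mk) o f)
              = TT m.+1 f).
Proof.
apply: tfind => [cs IH||c s IHc IHs] o m.
- rewrite nvt_node [masks _]/= big_cat !big_map hc_t_node.
  rewrite tau_node big_nat_recl // TT0 addrC; congr (_ + _).
  + transitivity (\sum_(j <- masks (nvf cs)) (lf j (hc_f cs))%:R *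
         \sum_(0 <= i < m) TT i (ind_f (mp o.+1 j) o.+1 cs)).
      apply: eq_bigr => mk _; rewrite ind_t_node {1}/mp subnn [lf _ _]/= /= TT_single tau_node.
      congr (_ * _); apply: eq_bigr => i _; congr (TT _ _).
      apply: (eq_ind.2) => j /andP [Hj _].
      rewrite /mp. have -> : (j - o = (j - o.+1).+1)%N by mlia. done.
    rewrite (eq_bigr (fun j => \sum_(0 <= i < m) (lf j (hc_f cs))%:R * TT i (ind_f (mp o.+1 j) o.+1 cs))); last by move=> j _; rewrite mulr_sumr.
    rewrite exchange_big /=; apply: eq_bigr => i _; exact: IH.
  + case: cs {IH} => [|c s].
      rewrite big_seq1 ind_t_node {1}/mp subnn /=.
      by rewrite mul1r /TT tau1.
    by rewrite big1 // => mk _; rewrite [lf _ _]/= mul0r.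
- rewrite [masks _]/= big_seq1 /= /TT /= !tau1; exact: mul1r.
- rewrite nvf_cons masks_add big_seq; under eq_bigr => m1 Hm1.
    have Hs : size m1 = size (hc_t c) by rewrite (size_hc.1 c); exact: size_masks Hm1.
    under eq_bigr => m2 _.
      rewrite hc_f_cons lf_cat // ind_f_cons TT_cat.
      have -> : ind_t (mp o (m1 ++ m2)) o c = ind_t (mp o m1) o c.
        apply: (eq_ind.1) => i /andP [H1 H2]; rewrite /mp nth_cat Hs (size_hc.1 c).
        by have -> : (i - o < nvt c)%N by mlia.
      have -> : ind_f (mp o (m1 ++ m2)) (o + nvt c) s = ind_f (mp (o + nvt c) m2) (o + nvt c) s.
        apply: (eq_ind.2) => i /andP [H1 H2]; rewrite /mp nth_cat Hs (size_hc.1 c).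
        have -> : (i - o < nvt c)%N = false by apply/negbTE; rewrite -leqNgt; mlia.
        by rewrite subnDA.
      rewrite -mulnb natrM mulrACA.
      over.
    rewrite -mulr_sumr.
    over.
  rewrite -big_seq -mulr_suml IHc IHs.
  by rewrite /TT Lambda_cons tau_diamond.
Qed.

Lemma R3 m f : TT m.+1 f = \sum_(mk <- masks (nvf f)) (lf mk (hc_f f))%:R * TT m (induced (predC (nth false mk)) f).
Proof.
rewrite -(R3s.2 f 0%N m); apply: eq_bigr => mk _; congr (_ * TT _ _).
apply: (eq_ind.2) => i _; by rewrite /mp subn0.
Qed.

Lemma GT m f : G k m f = TT m f.
Proof.
elim: m f => [|m IH] f.
  by rewrite G0 TT0; case: f.
rewrite G_S R3; apply: eq_bigr => mk _; by rewrite IH.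
Qed.

Lemma tau_trunc m p : tau m p = \sum_(0 <= i < m.+1) 'C(m, i)%:R * p`_i.
Proof.
rewrite (@tau_big m p (maxn (size p) m.+1)) ?leq_maxl // big_mkord.
rewrite (big_ord_widen (maxn (size p) m.+1) (fun i => 'C(m, i)%:R * p`_i)) ?leq_maxr //.
rewrite [RHS]big_mkcond /=; apply: eq_big => // i _; case: ltnP => Hi; first by rewrite mulrC.
by rewrite bin_small // mulr0.
Qed.

Lemma invert (a b : nat -> k) :
  (forall m, \sum_(0 <= i < m.+1) 'C(m, i)%:R * a i = \sum_(0 <= i < m.+1) 'C(m, i)%:R * b i) ->
  forall n, a n = b n.
Proof.
move=> H n; elim/ltn_ind: n => n IH.
have := H n; rewrite !big_nat_recr //= binn !mul1r.
have -> : \sum_(0 <= i < n) 'C(n, i)%:R * a i = \sum_(0 <= i < n) 'C(n, i)%:R * b i.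
  by apply: eq_big_nat => i /andP [_ Hi]; rewrite IH.
exact: addrI.
Qed.

Lemma FL n f : F k n f = (Lambda k f)`_n.
Proof.
apply: (invert (a := fun n => F k n f) (b := fun n => (Lambda k f)`_n)) => m.
by rewrite -tau_trunc -/(TT m f) -GT.
Qed.

End L.

Section Fin.
Variable k : fieldType.

Lemma convA n s : convpow_A (fun m => delta_tilde k m - eps_A k m) n s = (s == n)%:R.
Proof.
elim: n s => [|n IH] s; first by [].
rewrite /= /conv_A; case: s => [|s].
  by rewrite big_ord1 /= /delta_tilde /eps_A /= subrr mul0r.
rewrite big_ord_recl big_ord_recl big1 => [|i _].
  rewrite /= /delta_tilde /eps_A /= subrr subr0 mul0r add0r mul1r addr0 IH subn1 /=.
  by [].
by rewrite /= /delta_tilde /eps_A /= subrr mul0r.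
Qed.

Lemma sum_pick a b (c : nat -> k) s :
  \sum_(a <= n < b) c n * (s == n)%:R = if (a <= s < b)%N then c s else 0.
Proof.
elim: b => [|b IH]; first by rewrite big_geq // ltn0 andbF.
case: (leqP a b) => Hab.
  rewrite big_nat_recr //= IH; case: (eqVneq s b) => [->|Hsb].
    by rewrite ltnn andbF Hab ltnSn mulr1 add0r.
  by rewrite (_ : false%:R = 0) // mulr0 addr0 ltnS (@leq_eqVlt s b) (negbTE Hsb).
rewrite big_geq //; case: (boolP (a <= s < b.+1)%N) => // /andP [H1 H2]; exfalso; mlia.
Qed.

Lemma logA N s : log_partial_A N (delta_tilde k) s =
  \sum_(1 <= n < N.+1) ((-1) ^+ n.+1 / n%:R) * (s == n)%:R.
Proof. by apply: eq_bigr => n _; rewrite convA. Qed.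

Lemma coef_pick (p : {poly k}) (n : nat) : \sum_(i < size p) p`_i * (n == i :> nat)%:R = p`_n.
Proof.
transitivity (\sum_(0 <= i < size p) p`_i * (n == i)%:R); first by rewrite big_mkord.
rewrite sum_pick /=; case: ltnP => // H; by rewrite nth_default.
Qed.

End Fin.


Unset Implicit Arguments.
Theorem mainTheorem16 (k : fieldType) (hk : [pchar k] =i pred0) :
  (forall N : nat, log_partial_A N (delta_tilde k) 0%N = 0) /\
  (forall s N : nat, (1 <= s)%N -> (s <= N)%N ->
     log_partial_A N (delta_tilde k) s = (-1) ^+ s.+1 / s%:R) /\
  (forall (f : forest) (N : nat), (nvf f <= N)%N ->
     log_partial_CK N (delta_CK k) f
     = eval_A (log_partial_A N (delta_tilde k)) (Lambda k f)).
Proof.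
split; first by move=> N; rewrite logA sum_pick.
split; first by move=> s N H1 H2; rewrite logA sum_pick H1 ltnS H2.
move=> f N _.
rewrite /log_partial_CK /eval_A.
transitivity (\sum_(1 <= n < N.+1) ((-1) ^+ n.+1 / n%:R) * (Lambda k f)`_n).
  by apply: eq_bigr => n _; rewrite -FL.
under [RHS]eq_bigr do rewrite logA mulr_sumr.
rewrite [RHS]exchange_big /=; apply: eq_bigr => n _.
rewrite -(coef_pick (Lambda k f) n) mulr_sumr; apply: eq_bigr => i _; by rewrite mulrCA eq_sym.
Qed.
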